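(* Let $n\ge 2$, let $F$ be the free group of rank $n$ and $F^{(2)}$ its second derived subgroup. Let $K$ be a field of characteristic $0$ whose transcendence degree over $\mathbb{Q}$ is at least $n$. Then there is a group embedding $F/F^{(2)}\hookrightarrow ST(K)\subset \mathrm{SL}(2,K)$.
   Context: $F^{(2)}$ is the derived subgroup of $F^{(1)}=[F,F]$. $ST(K)$ denotes the group of matrices $\begin{bmatrix} a&0\\ b&a^{-1}\end{bmatrix}$ with $a\in K^*$, $b\in K$. *)

(* Defs.v *)
From HB Require Import structures.
From mathcomp Require Import all_boot all_order all_algebra.
From mathcomp Require Import mpoly.
Set Implicit Arguments. Unset Strict Implicit. Unset Printing Implicit Defensive.
Import GRing.Theory.
Local Open Scope ring_scope.

(* A letter is (i, b): generator x_i if b = false, its inverse x_i^-1 if b = true. *)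
Definition letter (n : nat) := ('I_n * bool)%type.
Definition word (n : nat) := seq (letter n).

Definition flip_letter n (a : letter n) : letter n := (a.1, ~~ a.2).
Definition winv n (w : word n) : word n := rev (map (@flip_letter n) w).
Definition wcomm n (u v : word n) : word n := winv u ++ winv v ++ u ++ v.

Inductive freeq n : word n -> word n -> Prop :=
| freeq_refl w : freeq w w
| freeq_sym w w' : freeq w w' -> freeq w' w
| freeq_trans w1 w2 w3 : freeq w1 w2 -> freeq w2 w3 -> freeq w1 w3
| freeq_cancel (u v : word n) (a : letter n) :
    freeq (u ++ [:: a; flip_letter a] ++ v) (u ++ v).

Inductive gen_sub n (S : word n -> Prop) : word n -> Prop :=
| gen_sub_base w : S w -> gen_sub S w
| gen_sub_nil : gen_sub S [::]
| gen_sub_cat u v : gen_sub S u -> gen_sub S v -> gen_sub S (u ++ v)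
| gen_sub_inv u : gen_sub S u -> gen_sub S (winv u)
| gen_sub_freeq u v : freeq u v -> gen_sub S u -> gen_sub S v.

Definition derived_sub n (H : word n -> Prop) : word n -> Prop :=
  gen_sub (fun w => exists u v, [/\ H u, H v & w = wcomm u v]).

Definition F1 n : word n -> Prop := derived_sub (fun _ : word n => True).
Definition F2 n : word n -> Prop := derived_sub (@F1 n).

Definition weval (K : fieldType) n (g : 'I_n -> 'M[K]_2) (w : word n) : 'M[K]_2 :=
  foldr (fun a m => (if a.2 then (g a.1)^-1 else g a.1) * m) 1 w.

Definition in_ST (K : fieldType) (M : 'M[K]_2) : Prop :=
  exists (a b : K), a != 0 /\
    M = \matrix_(i < 2, j < 2)
          (if (i == 0) && (j == 0) then a
           else if (i == 0) then 0
           else if (j == 0) then b else a^-1).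

(* K (of characteristic 0) has transcendence degree >= n over Q iff it contains
   n elements algebraically independent over Q (Q embedded via ratr). *)
Definition alg_indep_Q (K : fieldType) n (x : 'I_n -> K) : Prop :=
  forall p : {mpoly rat[n]}, mmap (@ratr K) x p = 0 -> p = 0.

Definition trdeg_Q_ge (K : fieldType) (n : nat) : Prop :=
  exists x : 'I_n -> K, alg_indep_Q x.

(* Main.v *)
Set Warnings "-notation-overridden,-ambiguous-paths,-notation-incompatible-prefix".
Require Import Defs.
From HB Require Import structures.
From mathcomp Require Import all_boot all_order all_algebra.
From mathcomp Require Import mpoly.
From mathcomp Require Import zify ring lra.
Set Implicit Arguments. Unset Strict Implicit. Unset Printing Implicit Defensive.
Import GRing.Theory.
Local Open Scope ring_scope.

Section Words.
Variable n : nat.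
Implicit Types (u w : word n).

Lemma flipK : involutive (@flip_letter n).
Proof. by case=> i b; rewrite /flip_letter /= negbK. Qed.

Lemma winvK : involutive (@winv n).
Proof. by move=> w; rewrite /winv map_rev revK (mapK flipK). Qed.

Lemma winv_cat u v : winv (u ++ v) = winv v ++ winv u.
Proof. by rewrite /winv map_cat rev_cat. Qed.

Lemma winv_cons a u : winv (a :: u) = winv u ++ [:: flip_letter a].
Proof. by rewrite /winv map_cons rev_cons cats1. Qed.

Lemma freeq_ctx u v x y : freeq x y -> freeq (u ++ x ++ v) (u ++ y ++ v).
Proof.
elim=> [w|w w' _ IH|w1 w2 w3 _ IH1 _ IH2|u' v' a].
- exact: freeq_refl.
- exact: freeq_sym.
- exact: freeq_trans IH2.
- have := freeq_cancel (u ++ u') (v' ++ v) a.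
  by rewrite -!catA /=.
Qed.

Lemma freeq_invl u : freeq (winv u ++ u) [::].
Proof.
elim: u => [|a u IH] /=; first exact: freeq_refl.
rewrite winv_cons -catA /=.
apply: freeq_trans (IH).
have := freeq_cancel (winv u) u (flip_letter a).
by rewrite flipK.
Qed.

Lemma freeq_invr u : freeq (u ++ winv u) [::].
Proof. by have := freeq_invl (winv u); rewrite winvK. Qed.

Lemma freeq_delinv x y u : freeq (x ++ winv u ++ u ++ y) (x ++ y).
Proof.
have := freeq_ctx x y (freeq_invl u). by rewrite catA -!catA.
Qed.

Section Balanced.
Variable H : word n -> Prop.
Hypothesis Hfr : forall w w', freeq w w' -> H w -> H w'.
Hypothesis Hnil : H [::].
Hypothesis Hcat : forall u v, H u -> H v -> H (u ++ v).
Hypothesis Hinv : forall u, H u -> H (winv u).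
Variable T : eqType.
Variable beta : T -> word n.
Hypothesis Hbeta : forall t, H (beta t).

Definition blk (k : T * bool) := if k.2 then winv (beta k.1) else beta k.1.

Lemma H_blk k : H (blk k).
Proof. by rewrite /blk; case: ifP => _; [apply: Hinv|]; apply: Hbeta. Qed.

Lemma H_flat s : H (flatten (map blk s)).
Proof. by elim: s => //= k s IH; apply: Hcat => //; apply: H_blk. Qed.

Lemma derived_fr w w' : freeq w w' -> derived_sub H w -> derived_sub H w'.
Proof. by move=> f d; apply: gen_sub_freeq f d. Qed.

Lemma balanced_prod s :
  (forall t, count_mem (t, false) s = count_mem (t, true) s) ->
  derived_sub H (flatten (map blk s)).
Proof.
move: {2}(size s) (leqnn (size s)) => m; elim: m s => [|m IH] [|[t b] s] //=;
  try by move=> *; apply: gen_sub_nil.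
move=> Hs Hbal.
have Hin : (t, ~~ b) \in s.
  have E := Hbal t; rewrite -has_pred1 has_count.
  destruct b; move: E => /=; rewrite ?eqE /= ?eqxx /= ?andbF ?andbT; lia.
have [s1 [s2 Es]] : exists s1 s2, s = s1 ++ (t, ~~ b) :: s2.
  by move: Hin; case/splitPr => s1 s2; exists s1, s2.
rewrite {}Es in Hs Hbal *.
have Hs' : (size (s1 ++ s2) <= m)%N by move: Hs; rewrite !size_cat /=; lia.
have Hbal' : forall t0, count_mem (t0, false) (s1 ++ s2) = count_mem (t0, true) (s1 ++ s2).
  move=> t0; have := Hbal t0; rewrite !count_cat /= !xpair_eqE.
  case: (eqVneq t t0) => [<-|ne] /=; rewrite ?eqxx ?(negbTE ne) /=; last lia.
  destruct b => /=; lia.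
have IHs := IH _ Hs' Hbal'.
rewrite map_cat flatten_cat in IHs.
rewrite map_cat flatten_cat /=.
set B := blk (t, b). set P1 := flatten (map blk s1). set P2 := flatten (map blk s2).
have HB : H B by apply: H_blk.
have HP1 : H P1 by apply: H_flat.
have -> : blk (t, ~~ b) = winv B by rewrite /B /blk; destruct b => /=; rewrite ?winvK.
have Hc : derived_sub H (wcomm (winv B) (winv P1)).
  by apply: gen_sub_base; exists (winv B), (winv P1); split => //; apply: Hinv.
have Hc2 := gen_sub_cat Hc IHs.
apply: derived_fr Hc2.
rewrite /wcomm !winvK.
have := freeq_delinv (B ++ P1 ++ winv B) P2 P1.
by rewrite -!catA.
Qed.

End Balanced.

Definition vec := {ffun 'I_n -> int}.
Definition ev (i : 'I_n) : vec := [ffun j => ((i == j) : nat)%:Z].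
Definition step (v : vec) (a : letter n) : vec :=
  if a.2 then v - ev a.1 else v + ev a.1.
Definition pw (i : 'I_n) (z : int) : word n :=
  match z with Posz k => nseq k (i, false) | Negz k => nseq k.+1 (i, true) end.
Definition pth (v : vec) : word n := flatten [seq pw i (v i) | i <- enum 'I_n].
Definition gam (x : vec * 'I_n) : word n :=
  pth x.1 ++ (x.2, false) :: winv (pth (x.1 + ev x.2)).
Fixpoint keys (w : word n) (v : vec) : seq ((vec * 'I_n) * bool) :=
  match w with
  | [::] => [::]
  | a :: w' => (if a.2 then ((v - ev a.1, a.1), true) else ((v, a.1), false))
                 :: keys w' (step v a)
  end.

Lemma freeq_catl u x y : freeq x y -> freeq (u ++ x) (u ++ y).
Proof. by move=> /(freeq_ctx u [::]); rewrite !cats0. Qed.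

Lemma telescope w v :
  freeq (flatten (map (blk gam) (keys w v))) (pth v ++ w ++ winv (pth (foldl step v w))).
Proof.
elim: w v => [|[i b] w IH] v /=.
  by apply: freeq_sym; apply: freeq_invr.
have E : blk gam (if b then ((v - ev i, i), true) else ((v, i), false)) =
   pth v ++ (i, b) :: winv (pth (step v (i, b))).
  rewrite /blk /gam /step; case: b => //=.
  by rewrite winv_cat winv_cons winvK /= subrK -catA.
rewrite E; apply: freeq_trans (freeq_catl _ (IH _)) _.
have := freeq_delinv (pth v ++ [:: (i, b)]) (w ++ winv (pth (foldl step (step v (i, b)) w)))
   (pth (step v (i, b))).
by rewrite -!catA /=.
Qed.

Definition pos (z : int) : nat := match z with Posz k => k | Negz _ => 0 end.
Definition neg (z : int) : nat := match z with Posz _ => 0 | Negz k => k.+1 end.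
Lemma pn z : (pos z + 1 + neg (z + Posz 1) = neg z + pos (z + Posz 1))%N.
Proof. case: z => [k|[|k]] /=; lia. Qed.

Lemma sum_delta (j : 'I_n) (F : 'I_n -> nat) :
  sumn [seq (if i == j then F i else 0%N) | i <- enum 'I_n] = F j.
Proof.
rewrite sumnE big_map big_enum /= (bigD1 j) //= eqxx big1 ?addn0 //.
by move=> i /negbTE ->.
Qed.

Lemma count_pw j b i z :
  count_mem (j, b) (pw i z) = if i == j then (if b then neg z else pos z) else 0%N.
Proof.
case: z => k /=; rewrite count_nseq /= xpair_eqE;
  case: (i == j); case: b => /=; lia.
Qed.

Lemma count_pth j b v : count_mem (j, b) (pth v) = if b then neg (v j) else pos (v j).
Proof.
rewrite /pth count_flatten -map_comp.
rewrite (eq_map (g := fun i => if i == j then (if b then neg (v i) else pos (v i)) else 0%N)).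
  by rewrite sum_delta.
by move=> i /=; rewrite count_pw; case: eqP => // ->.
Qed.

Lemma count_winv j b w : count_mem (j, b) (winv w) = count_mem (j, ~~ b) w.
Proof.
rewrite /winv count_rev count_map; apply: eq_count => -[k c] /=.
by rewrite /flip_letter /= !xpair_eqE; case: b; case: c.
Qed.

Lemma flat_letters w :
  flatten (map (blk (fun i : 'I_n => [:: (i, false)])) w) = w.
Proof. by elim: w => //= a w ->; case: a => i [|]. Qed.

Lemma F1_bal w : (forall j, count_mem (j, false) w = count_mem (j, true) w) -> F1 w.
Proof.
move=> Hb.
rewrite /F1 -[X in derived_sub _ X]flat_letters.
by apply: balanced_prod.
Qed.

Lemma F1_gam x : F1 (gam x).
Proof.
apply: F1_bal => j; case: x => v i.
rewrite /gam /= !count_cat /= !count_winv !count_pth /= !xpair_eqE /= !andbT andbF add0n.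
rewrite !ffunE; case: (i =P j) => _ /=; first by have := pn (v j); lia.
by rewrite addr0; lia.
Qed.

Lemma pth0 : pth 0 = [::].
Proof. by rewrite /pth; elim: (enum 'I_n) => //= i s; rewrite ffunE. Qed.

Lemma F2_closed w : foldl step 0 w = 0 ->
  (forall k, count_mem (k, false) (keys w 0) = count_mem (k, true) (keys w 0)) ->
  F2 w.
Proof.
move=> Hend Hbal.
have D : F2 (flatten (map (blk gam) (keys w 0))).
  apply: (balanced_prod (H := @F1 n)) => //.
  - exact: gen_sub_nil.
  - by move=> ? ? ? ?; apply: gen_sub_cat.
  - by move=> ? ?; apply: gen_sub_inv.
  - exact: F1_gam.
apply: gen_sub_freeq D; have := telescope w 0.
by rewrite Hend pth0 /winv /= cats0.
Qed.

End Words.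
Arguments step {n}. Arguments keys {n}. Arguments pth {n}. Arguments gam {n}. Arguments ev {n}.

Section Indep.
Variable K : fieldType.
Hypothesis hK : [pchar K] =i pred0.

Lemma ratr_add : zmod_morphism (@ratr K).
Proof.
have injZtoQ: @injective rat int intr by apply: intr_inj.
have nz_den x: (denq x)%:~R != 0 :> K.
  have := denq_gt0 x; case: (denq x) => // k; rewrite ltz_nat => k0.
  by rewrite /= ((pcharf0P K).1 hK) -lt0n.
move=> x y.
apply: (canLR (mulfK (nz_den _))); apply: (mulIf (nz_den x)).
rewrite mulrAC mulrBl divfK ?nz_den // mulrAC -!rmorphM.
apply: (mulIf (nz_den y)); rewrite mulrAC mulrBl divfK ?nz_den //.
rewrite -!(rmorphM, rmorphB); congr _%:~R; apply: injZtoQ.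
rewrite !(rmorphM, rmorphB) /= [_ - _]lock /= -lock !numqE.
by rewrite (mulrAC y) -!mulrBl -mulrA mulrAC !mulrA.
Qed.

Variable n : nat.
Variable t : 'I_n -> K.
Hypothesis ht : alg_indep_Q t.

Definition tpow (u : {ffun 'I_n -> int}) : K := \prod_i t i ^ (u i).

Lemma t_neq0 i : t i != 0.
Proof.
apply/negP => /eqP E.
have : ('X_i : {mpoly rat[n]}) = 0.
  apply: ht; rewrite /mmap msuppX big_seq1 mcoeffX eqxx mmap1U E.
  by rewrite mulr0.
by move/(congr1 (mcoeff U_(i))); rewrite mcoeffX eqxx raddf0 => /eqP; rewrite oner_eq0.
Qed.


Lemma tpow_neq0 u : tpow u != 0.
Proof.
by rewrite /tpow; apply/prodf_neq0 => i _; rewrite expfz_neq0 // t_neq0.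
Qed.

Lemma ratr1 : ratr (1 : rat) = 1 :> K.
Proof. by rewrite /ratr /= divr1. Qed.

Lemma mmapXt (m : 'X_{1..n}) : mmap (@ratr K) t 'X_[m] = mmap1 t m.
Proof. by rewrite /mmap msuppX big_seq1 mcoeffX eqxx ratr1 mul1r. Qed.

Definition rf : {additive rat -> K} :=
  HB.pack (@ratr K) (GRing.isZmodMorphism.Build _ _ _ ratr_add).

Lemma mmapMz (q : {mpoly rat[n]}) z :
  mmap (@ratr K) t (q *~ z) = mmap (@ratr K) t q *~ z.
Proof. exact: (raddfMz (mmap rf t)). Qed.

Lemma mmap_sum (I : Type) (s : seq I) (F : I -> {mpoly rat[n]}) :
  mmap (@ratr K) t (\sum_(k <- s) F k) = \sum_(k <- s) mmap (@ratr K) t (F k).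
Proof. exact: (raddf_sum (mmap rf t)). Qed.

Lemma indep (I : eqType) (s : seq I) (c : I -> int) (u : I -> {ffun 'I_n -> int})
  (u0 : {ffun 'I_n -> int}) :
  \sum_(k <- s) (c k)%:~R * tpow (u k) = 0 ->
  \sum_(k <- s | u k == u0) c k = 0.
Proof.
move=> Hs.
pose L := u0 :: map u s.
pose N : nat := (\max_(v <- L) \max_i absz (v i))%N.
have bnd v i : v \in L -> (absz (v i) <= N)%N.
  move=> vL.
  have h1 := @leq_bigmax_seq _ L xpredT (fun v => (\max_i absz (v i))%N) v vL isT.
  have h2 := @leq_bigmax _ (fun i => absz (v i)) i.
  exact: leq_trans h2 h1.
clearbody N.
pose m (v : {ffun 'I_n -> int}) : 'X_{1..n} := [multinom absz (v i + N%:Z)%R | i < n].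
have mE v : v \in L -> mmap1 t (m v) = tpow v * \prod_i t i ^+ N.
  move=> vL; rewrite /mmap1 /tpow -big_split /=; apply: eq_bigr => i _.
  rewrite mnmE exprnP [t i ^+ N]exprnP -expfzDr ?t_neq0 //; congr (_ ^ _).
  have := bnd v i vL; move: (v i) => z; lia.
have minj v v' : v \in L -> v' \in L -> (m v == m v') = (v == v').
  move=> vL v'L; apply/eqP/eqP => [E|->//]; apply/ffunP => i.
  have := congr1 (fun mm : 'X_{1..n} => mm i) E; rewrite /m !mnmE.
  have := bnd v i vL; have := bnd v' i v'L; move: (v i) (v' i) => z z'; lia.
pose p : {mpoly rat[n]} := \sum_(k <- s) 'X_[m (u k)] *~ c k.
have p0 : p = 0.
  apply: ht; rewrite mmap_sum (eq_big_seq (fun k => (\prod_i t i ^+ N) * ((c k)%:~R * tpow (u k)))).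
    by rewrite -mulr_sumr Hs mulr0.
  move=> k ks.
  rewrite mmapMz mmapXt mE.
    by rewrite -mulrzl; ring.
  by rewrite inE map_f ?orbT.
have := congr1 (mcoeff (m u0)) p0; rewrite raddf0 raddf_sum /=.
rewrite (eq_big_seq (fun k => ((u k == u0) : nat)%:R *~ c k)); last first.
  move=> k ks; rewrite raddfMz /= mcoeffX minj //; first by rewrite inE map_f ?orbT.
  by rewrite inE eqxx.
rewrite (big_mkcond (fun k => u k == u0)) /=.
rewrite (eq_bigr (fun k => (if u k == u0 then c k else 0)%:~R)); last first.
  by move=> k _; case: (u k == u0); rewrite /= ?mul0rz // mulr1z.
by rewrite -rmorph_sum /= => /eqP; rewrite intr_eq0 => /eqP.
Qed.


Lemma tpowD u u' : tpow (u + u') = tpow u * tpow u'.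
Proof.
rewrite /tpow -big_split; apply: eq_bigr => i _.
by rewrite ffunE expfzDr ?t_neq0.
Qed.

Lemma tpowN u : tpow (- u) = (tpow u)^-1.
Proof.
rewrite /tpow -prodfV; apply: eq_bigr => i _.
by rewrite ffunE invr_expz.
Qed.

Lemma tpow0 : tpow 0 = 1.
Proof. by rewrite /tpow big1 // => i _; rewrite ffunE expr0z. Qed.

Lemma tpow_ev i : tpow (ev i) = t i.
Proof.
rewrite /tpow (bigD1 i) //= ffunE eqxx expr1z big1 ?mulr1 //.
by move=> j /negbTE ji; rewrite ffunE eq_sym ji expr0z.
Qed.

Lemma tpow2 u : tpow (u *+ 2) = tpow u ^+ 2.
Proof. by rewrite mulr2n tpowD expr2. Qed.

End Indep.

Section Rep.
Variable K : fieldType.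
Variable n : nat.
Variable t : 'I_n -> K.
Hypothesis tnz : forall i, t i != 0.

Definition Mx (a b : K) : 'M[K]_2 :=
  \matrix_(i < 2, j < 2)
     (if (i == 0) && (j == 0) then a
      else if (i == 0) then 0
      else if (j == 0) then b else a^-1).

Lemma Mx_mul a b c d : Mx a b * Mx c d = Mx (a * c) (b * c + a^-1 * d).
Proof.
rewrite -mulmxE; apply/matrixP => i j; rewrite !mxE !big_ord_recl big_ord0 !mxE.
case: i => [[|[|//]] ?]; case: j => [[|[|//]] ?] /=; rewrite ?invfM; ring.
Qed.

Lemma Mx1 : Mx 1 0 = 1.
Proof.
apply/matrixP => i j; rewrite !mxE.
by case: i => [[|[|//]] ?]; case: j => [[|[|//]] ?] /=; rewrite ?invr1.
Qed.

Lemma Mx_inj a b c d : Mx a b = Mx c d -> a = c /\ b = d.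
Proof.
move=> E; split.
  by have := congr1 (fun M : 'M[K]_2 => M 0 0) E; rewrite !mxE.
by have := congr1 (fun M : 'M[K]_2 => M 1 0) E; rewrite !mxE.
Qed.

Definition gm (i : 'I_n) := Mx (t i) (t i ^+ 2).

Lemma gm_inv i : (gm i)^-1 = Mx (t i)^-1 (- t i ^+ 2).
Proof.
have h1 : gm i * Mx (t i)^-1 (- t i ^+ 2) = 1.
  rewrite /gm Mx_mul -Mx1; congr Mx; field; by rewrite ?tnz.
have h2 : Mx (t i)^-1 (- t i ^+ 2) * gm i = 1.
  rewrite /gm Mx_mul -Mx1; congr Mx; rewrite ?invrK; field; by rewrite ?tnz.
have U : gm i \is a GRing.unit by apply/unitrP; exists (Mx (t i)^-1 (- t i ^+ 2)); split.
by rewrite -[_^-1]mulr1 -h1 mulrA mulVr // mul1r.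
Qed.

Definition ga (a : letter n) : K := if a.2 then (t a.1)^-1 else t a.1.
Definition gb (a : letter n) : K := if a.2 then - t a.1 ^+ 2 else t a.1 ^+ 2.

Definition AB (w : word n) : K * K :=
  foldr (fun a p => (ga a * p.1, gb a * p.1 + (ga a)^-1 * p.2)) (1, 0) w.
Definition A w := (AB w).1.
Definition B w := (AB w).2.

Lemma weval_M w : weval gm w = Mx (A w) (B w).
Proof.
elim: w => [|a w IH] /=; first by rewrite /A /B /= Mx1.
rewrite IH /A /B /=.
have -> : (if a.2 then (gm a.1)^-1 else gm a.1) = Mx (ga a) (gb a).
  by rewrite /ga /gb; case: a.2; rewrite ?gm_inv.
by rewrite Mx_mul.
Qed.

Lemma ga_neq0 a : ga a != 0.
Proof. by rewrite /ga; case: a.2; rewrite ?invr_eq0 tnz. Qed.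

Lemma A_neq0 w : A w != 0.
Proof.
elim: w => [|a w IH]; first by rewrite /A oner_eq0.
by rewrite /A /= mulf_neq0 // ga_neq0.
Qed.

Lemma A_cat u v : A (u ++ v) = A u * A v.
Proof. by elim: u => [|a u IH]; rewrite /A /= ?mul1r // -/(A _) IH mulrA. Qed.

Lemma B_cat u v : B (u ++ v) = B u * A v + (A u)^-1 * B v.
Proof.
elim: u => [|a u IH]; first by rewrite /A /B /= mul0r add0r invr1 mul1r.
rewrite /B /= -/(A _) -/(B _) -/(A u) -/(B u) IH A_cat invfM.
ring.
Qed.

Lemma AB_eq u v : A u = A v -> B u = B v -> AB u = AB v.
Proof. by rewrite /A /B; case: (AB u); case: (AB v) => ? ? ? ? /= -> ->. Qed.

Lemma AB_freeq w w' : freeq w w' -> AB w = AB w'.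
Proof.
elim=> [//|w1 w2 _ -> //|w1 w2 w3 _ -> _ -> //|u v a].
have HA : A [:: a; flip_letter a] = 1.
  rewrite /A /= /ga /flip_letter /=; case: a.2 => /=; rewrite mulr1 ?divff ?mulVf //; exact: tnz.
have HB : B [:: a; flip_letter a] = 0.
  rewrite /B /A /= /ga /gb /flip_letter /=; case: a.2 => /=; rewrite ?invrK; field; exact: tnz.
apply: AB_eq.
  by rewrite !A_cat HA mul1r.
by rewrite !B_cat !A_cat HA HB invr1; ring.
Qed.

Lemma A_winv u : A (winv u) = (A u)^-1.
Proof.
have := AB_freeq (freeq_invl u) => /(congr1 fst); rewrite -/(A _) A_cat /A /= => E.
by rewrite -[LHS]mulr1 -(mulfV (A_neq0 u)) mulrA E mul1r.
Qed.

Lemma B_winv u : B (winv u) = - B u.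
Proof.
have := AB_freeq (freeq_invl u) => /(congr1 snd); rewrite -/(B _) B_cat A_winv invrK => E.
have Hu := A_neq0 u.
apply: (mulIf Hu); rewrite mulNr; apply/eqP; rewrite -addr_eq0.
by rewrite [B u * _]mulrC E.
Qed.

Lemma F1_A w : F1 w -> A w = 1.
Proof.
elim=> [x [u [v [_ _ ->]]]| |x y _ Hx _ Hy|x _ Hx|x y f _ Hx].
- rewrite /wcomm !A_cat !A_winv.
  have hu := A_neq0 u; have hv := A_neq0 v.
  field; by rewrite ?hu ?hv.
- by [].
- by rewrite A_cat Hx Hy mulr1.
- by rewrite A_winv Hx invr1.
- by rewrite /A -(AB_freeq f).
Qed.

Lemma F2_AB w : F2 w -> A w = 1 /\ B w = 0.
Proof.
elim=> [x [u [v [Fu Fv ->]]]| |x y _ [Ax Bx] _ [Ay By]|x _ [Ax Bx]|x y f _ [Ax Bx]].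
- have Au := F1_A Fu; have Av := F1_A Fv.
  rewrite /wcomm !A_cat !B_cat !A_cat !A_winv !B_winv Au Av !invr1 !mul1r !mulr1.
  split => //.
  by rewrite (addrC (B u)) addKr addNr.
- by [].
- by rewrite A_cat B_cat Ax Ay Bx By; split; ring.
- by rewrite A_winv B_winv Ax Bx invr1 oppr0.
- by rewrite /A /B -(AB_freeq f).
Qed.

End Rep.

Lemma sum_sign (T : eqType) (s : seq (T * bool)) x :
  \sum_(k <- s | k.1 == x) (if k.2 then -1 else 1 : int) =
  (count_mem (x, false) s)%:Z - (count_mem (x, true) s)%:Z.
Proof.
elim: s => [|[y b] s IH]; first by rewrite big_nil.
rewrite big_cons /= IH !xpair_eqE.
case: (y == x) => /=; case: b => /=; lia.
Qed.

Definition fk n (x : vec n * 'I_n) : vec n := ev x.2 - x.1 *+ 2.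

Arguments fk {n}.

Lemma fk_inj n (x y : vec n * 'I_n) : (fk x == fk y) = (x == y).
Proof.
apply/eqP/eqP => [E|->//]; case: x y E => [u i] [v j] E.
have Ei := congr1 (fun f : vec n => f i) E; rewrite /fk /= !ffunE eqxx /= in Ei.
have ij : i = j.
  apply/eqP; move: Ei; case: (j == i) /eqP => [->|_] //=.
  move: (u i) (v i) => a b; lia.
subst j; congr (_, _); apply/ffunP => k.
have := congr1 (fun f : vec n => f k) E; rewrite /fk /= !ffunE.
move: (u k) (v k) => a b; lia.
Qed.

Section Final.
Variable K : fieldType.
Hypothesis hK : [pchar K] =i pred0.
Variable n : nat.
Variable t : 'I_n -> K.
Hypothesis ht : alg_indep_Q t.

Local Notation tnz := (t_neq0 ht).

Lemma tpow_step v a : tpow t (step v a) = tpow t v * ga t a.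
Proof.
rewrite /step /ga; case: a.2; rewrite (tpowD ht) ?(tpowN t) (tpow_ev t) //.
Qed.

Lemma A_end w v : tpow t v * A t w = tpow t (foldl step v w).
Proof.
elim: w v => [|a w IH] v; first by rewrite /A /= mulr1.
by rewrite /= -IH tpow_step /A /= mulrA.
Qed.

Lemma tpow_fk u i : tpow t (fk (u, i)) = t i / tpow t u ^+ 2.
Proof. by rewrite /fk /= (tpowD ht) (tpowN t) (tpow2 ht) (tpow_ev t). Qed.

Definition Ssum w v : K :=
  \sum_(k <- keys w v) (if k.2 then -1 else 1) * tpow t (fk k.1).

Lemma B_S w v : B t w = tpow t v ^+ 2 * A t w * Ssum w v.
Proof.
elim: w v => [|[i b] w IH] v; first by rewrite /B /Ssum /= big_nil mulr0.
rewrite /Ssum /= big_cons -/(Ssum _ _).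
have tv := tpow_neq0 ht v; have ti := tnz i.
rewrite /B /= -/(B _ _) -/(A _ _) (IH (step v (i, b))) tpow_step.
rewrite [A t (_ :: _)]/A /= -/(A t w).
case: b => /=; rewrite tpow_fk ?(tpow_step v (i, true)) /ga /gb /=.
- field; by rewrite ?tv ?ti ?oner_eq0.
- field; by rewrite ?tv ?ti ?oner_eq0.
Qed.

End Final.

Unset Implicit Arguments.
Theorem corollary3p4 (n : nat) (K : fieldType) :
  (2 <= n)%N ->
  [pchar K] =i pred0 ->
  trdeg_Q_ge K n ->
  exists g : 'I_n -> 'M[K]_2,
    (forall i, in_ST (g i)) /\
    (forall w : word n, weval g w = 1 <-> F2 w).
Proof.
move=> _ hK [x hx]; exists (gm x); split.
  move=> i; exists (x i), (x i ^+ 2); split; last by [].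
  exact: (t_neq0 hx i).
move=> w; rewrite (weval_M (t_neq0 hx)); split; last first.
  by move=> /(F2_AB (t_neq0 hx)) [-> ->]; exact: Mx1.
rewrite -Mx1 => /Mx_inj [HA HB].
apply: F2_closed.
- have E := A_end hx w 0; rewrite tpow0 HA mulr1 in E.
  have := @indep K hK n x hx _ [:: true; false] (fun b => if b then 1 else -1)
    (fun b => if b then foldl step 0 w else 0) (foldl step 0 w).
  rewrite !big_cons big_nil /= -E tpow0 eqxx.
  case: (0 =P foldl step 0 w) => [<- //|_].
  rewrite big_nil addr0 => H.
  have H0 : (1%:~R * 1 + (-1)%:~R * 1 : K) = 0.
    by rewrite !mulr1 mulrN1z mulr1z subrr.
  by have := H H0.
- move=> k.
  have S0 : Ssum x w 0 = 0.
    by have := B_S hx w 0; rewrite HB HA tpow0 expr1n !mul1r.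
  have := @indep K hK n x hx _ (keys w 0) (fun k => if k.2 then -1 else 1)
    (fun k => fk k.1) (fk k).
  rewrite (eq_bigr (fun k0 => (if k0.2 then -1 else 1) * tpow x (fk k0.1))); last first.
    by move=> k0 _; case: k0.2.
  rewrite -/(Ssum x w 0) S0 => /(_ erefl).
  rewrite (eq_bigl (fun k0 => k0.1 == k)); last by move=> k0; rewrite fk_inj.
  by rewrite sum_sign => /eqP; rewrite subr_eq0 => /eqP [].
Qed.
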